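(* Let $X$ and $Y$ be compact metric spaces, with $d$ the metric on $X$. Let $\phi:\mathrm{C}(X)\to \mathrm{M}_n(\mathrm{C}(Y))$ be the diagonal $*$-homomorphism $\phi(f)=\mathrm{diag}(f\circ\lambda_1,\dots,f\circ\lambda_n)$ determined by continuous maps $\lambda_1,\dots,\lambda_n:Y\to X$. Let $x_0\in X$, $f\in \mathrm{C}(X)$ and $\epsilon>0$, and let $\eta>0$ be such that $|f(x)-f(y)|<\epsilon$ whenever $d(x,y)<2\eta$. Suppose $F_1,\dots,F_m$ ($m\le n$) are nonempty closed subsets of $Y$ such that $d(\lambda_i(y),x_0)<\eta$ whenever $y\in F_i$. Then there exist a unitary $u\in \mathrm{M}_m(\mathrm{C}(Y))\oplus 1_{n-m}$ and an element $b\in \mathrm{M}_{m-1}(\mathrm{C}(Y))$ such that for every $y\in\bigcup_{i=1}^m F_i$, \[ \big\| u(y)\phi(f)(y)u^*(y)-\mathrm{diag}\big(f(x_0),\,b(y),\,f(\lambda_{m+1}(y)),\dots,f(\lambda_n(y))\big)\big\|<2\epsilon \] (if $m=1$ there is no $b$ block).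
   Context: $\mathrm{M}_m(\mathrm{C}(Y))\oplus 1_{n-m}$ denotes the set of $n\times n$ matrices of the form $\begin{pmatrix} a&0\\0&1_{n-m}\end{pmatrix}$ with $a\in\mathrm{M}_m(\mathrm{C}(Y))$. *)

(* Defs.v *)
From HB Require Import structures.
From mathcomp Require Import all_boot all_order all_algebra.
From mathcomp Require Import all_classical all_reals all_analysis.
From mathcomp.real_closed Require Export complex.
Import Order.TTheory GRing.Theory Num.Theory.
Import numFieldTopology.Exports numFieldNormedType.Exports.
Set Implicit Arguments. Unset Strict Implicit. Unset Printing Implicit Defensive.
Local Open Scope ring_scope.
Local Open Scope complex_scope.

(* The complex numbers over the real numbers R, seen as a numClosedFieldType
   (this is the structure that carries MathComp-Analysis's topology). *)
Definition Cplx (R : realType) : numClosedFieldType := R[i].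

Definition cmod (R : realType) (z : Cplx R) : R :=
  let: a +i* b := z in Num.sqrt (a ^+ 2 + b ^+ 2).

Definition cvec_norm (R : realType) n (v : 'cV[Cplx R]_n) : R :=
  Num.sqrt (\sum_(i < n) cmod (v i 0) ^+ 2).

(* operator norm of a matrix on (C^n, l^2): this is the C*-norm of M_n(C) *)
Definition cmx_opnorm (R : realType) n (A : 'M[Cplx R]_n) : R :=
  sup [set cvec_norm (A *m v) | v in [set v : 'cV[Cplx R]_n | cvec_norm v <= 1]].

Definition ctrmx (R : realType) n (A : 'M[Cplx R]_n) : 'M[Cplx R]_n :=
  map_mx Num.conj A^T.

Definition unitary_cmx (R : realType) n (U : 'M[Cplx R]_n) : Prop :=
  U *m ctrmx U = 1%:M /\ ctrmx U *m U = 1%:M.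

Definition diag_starhom (R : realType) (X Y : Type) n (lam : 'I_n -> Y -> X)
  (f : X -> Cplx R) (y : Y) : 'M[Cplx R]_n :=
  diag_mx (\row_i f (lam i y)).

(* Main.v *)
Require Import Defs.
From HB Require Import structures.
From mathcomp Require Import all_boot all_order all_algebra.
From mathcomp Require Import all_classical all_reals all_analysis.
From mathcomp.real_closed Require Import complex.
From mathcomp Require Import lra ring.
Import Order.TTheory GRing.Theory Num.Theory.
Import numFieldTopology.Exports numFieldNormedType.Exports.
Local Open Scope classical_set_scope.
Local Open Scope ring_scope.
Section LibSec.
Local Open Scope complex_scope.


Lemma sumr_delta (R : pzRingType) n (F : 'I_n -> R) i :
  \sum_l (i == l)%:R * F l = F i.
Proof.
rewrite (bigD1 i) //= eqxx mul1r big1 ?addr0 // => l /negPf.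
by rewrite eq_sym => ->; rewrite mul0r.
Qed.

Lemma sumr_delta' (R : pzRingType) n (F : 'I_n -> R) i :
  \sum_l (l == i)%:R * F l = F i.
Proof. by under eq_bigr do rewrite eq_sym; exact: sumr_delta. Qed.

Lemma normc_real (R : realType) (a : R) : `|(a%:C : Cplx R)| = (`|a|)%:C.
Proof. by rewrite normc_def /= expr0n /= addr0 sqrtr_sqr. Qed.

Lemma cmodE (R : realType) (z : Cplx R) : (cmod z)%:C = `|z|.
Proof. by case: z => a b; rewrite normc_def. Qed.

Lemma rc_cont (R : realType) (T : topologicalType) (r : T -> R) :
  continuous r -> continuous (fun t => (r t)%:C : Cplx R).
Proof.
move=> rc x; apply/cvgrPdist_lt => e e0.
have : (0 < @complex.Re R e) /\ (e = (@complex.Re R e)%:C).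
  move: e0; rewrite ltcE => /andP[/eqP Ie Re0]; split => //.
  by case: e Ie {Re0} => a b /= ->.
move=> [Re0 ->].
have := (rc x); move/cvgrPdist_lt => /(_ _ Re0).
apply: filterS => t ht.
by rewrite -rmorphB normc_real ltcR.
Qed.

Lemma mdist_cont (R : realType) (X : metricType R) (T : topologicalType)
  (h : T -> X) (x0 : X) : continuous h -> continuous (fun t => mdist (h t) x0).
Proof.
move=> hc t; apply/cvgrPdist_lt => e e0.
have := (metricType_numDomainType.cvgrPdist_lt h (h t)).1 (hc t) e e0.
move=> /(_ (nbhs_filter t)) H; near=> s.
have hs : mdist (h t) (h s) < e by near: s.
have t1 := metric_triangle (h t) (h s) x0.
have t2 := metric_triangle (h s) (h t) x0.
rewrite (metric_sym (h s) (h t)) in t2.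
rewrite ltr_norml; apply/andP; split; lra.
Unshelve. all: by end_near. Qed.

Section Construction.
Variables (R : realType) (T : topologicalType) (m : nat) (dd : 'I_m.+1 -> T -> R) (eta : R).
Hypothesis dd_cont : forall i, continuous (dd i).
Hypothesis eta_gt0 : 0 < eta.

Definition gg i y := Num.max 0 (2 * eta - dd i y).
Definition ss y := \sum_i gg i y.
Definition gg' i y := gg i y + (if i == ord0 then Num.max 0 (eta - ss y) else 0).
Definition nrm y := Num.sqrt (\sum_i gg' i y ^+ 2).
Definition vv i y := gg' i y / nrm y.
Definition ww i y := (i == ord0)%:R + vv i y.
Definition HH y : 'M[R]_m.+1 :=
  \matrix_(i, j) ((i == j)%:R - ww i y * ww j y / (1 + vv ord0 y)).

Lemma gg_ge0 i y : 0 <= gg i y.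
Proof. by rewrite /gg le_max lexx. Qed.

Lemma gg'_ge0 i y : 0 <= gg' i y.
Proof.
rewrite /gg' addr_ge0 ?gg_ge0 //; case: ifP => _ //.
by rewrite le_max lexx.
Qed.

Lemma sum_gg' y : eta <= \sum_i gg' i y.
Proof.
rewrite /gg' big_split /= -/(ss y) (bigD1 ord0) //= big1 ?addr0; last first.
  by move=> i /negPf ->.
have : eta - ss y <= Num.max 0 (eta - ss y) by rewrite le_max lexx orbT.
set M := Num.max _ _ => h.
lra.
Qed.

Lemma nrm_gt0 y : 0 < nrm y.
Proof.
rewrite /nrm sqrtr_gt0 lt_def sumr_ge0 ?andbT; last by move=> i _; rewrite sqr_ge0.
apply/negP => /eqP h0.
have h := psumr_eq0P (fun i _ => sqr_ge0 (gg' i y)) h0.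
have := sum_gg' y; rewrite big1 => [|i _]; first by move=> h1; move: eta_gt0; rewrite ltNge h1.
by apply/eqP; rewrite -sqrf_eq0; apply/eqP; exact: h.
Qed.

Lemma vv_ge0 i y : 0 <= vv i y.
Proof. by rewrite /vv divr_ge0 ?gg'_ge0 // ltW ?nrm_gt0. Qed.

Lemma sum_vv2 y : \sum_i vv i y ^+ 2 = 1.
Proof.
have hn := nrm_gt0 y.
under eq_bigr do rewrite /vv expr_div_n.
rewrite -mulr_suml /nrm sqr_sqrtr ?sumr_ge0 // => [|i _]; last by rewrite sqr_ge0.
rewrite divff //; apply/eqP => h0.
by move: hn; rewrite /nrm h0 sqrtr0 ltxx.
Qed.

Lemma t_neq0 y : 1 + vv ord0 y != 0.
Proof. have h := vv_ge0 ord0 y; rewrite lt0r_neq0 //; lra. Qed.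

Lemma HH_sym y i j : HH y i j = HH y j i.
Proof. by rewrite !mxE eq_sym (mulrC (ww i y)). Qed.

Lemma HH_col0 y i : HH y i ord0 = - vv i y.
Proof.
rewrite mxE.
have -> : ww ord0 y = 1 + vv ord0 y by rewrite /ww eqxx.
rewrite -mulrA mulfV ?t_neq0 // mulr1 /ww.
case: (i == ord0); ring.
Qed.

Lemma sum_ww2 y : \sum_l ww l y ^+ 2 = 2 * (1 + vv ord0 y).
Proof.
rewrite /ww.
under eq_bigr do rewrite sqrrD.
rewrite !big_split /= sum_vv2 (bigD1 ord0) //= big1 => [|l /negPf -> ]; last first.
  by rewrite expr0n.
by rewrite sumr_delta'; ring.
Qed.

Lemma HH_orth y : HH y *m HH y = 1%:M.
Proof.
apply/matrixP => i j; rewrite !mxE.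
have ht := t_neq0 y.
under eq_bigr do rewrite !mxE.
set t := 1 + vv ord0 y.
transitivity (\sum_l ((i == l)%:R * ((l == j)%:R) - (i == l)%:R * (ww l y * ww j y / t)
   - (l == j)%:R * (ww i y * ww l y / t) + (ww i y * ww j y / t^+2) * ww l y ^+ 2)).
  apply: eq_bigr => l _.
  rewrite /t; field; exact: ht.
rewrite !big_split /= !sumrN !sumr_delta sumr_delta' -mulr_sumr sum_ww2 -/t.
rewrite /t; field; exact: ht.
Qed.

Lemma gg_cont i : continuous (gg i).
Proof.
move=> y; apply: (@continuous_max R T (fun=> 0) (fun y => 2 * eta - dd i y)).
  exact: cvg_cst.
by apply: cvgB; [exact: cvg_cst | exact: dd_cont].
Qed.

Lemma ss_cont : continuous ss.
Proof.
rewrite /ss; apply: continuous_big => //; first exact: add_continuous.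
move=> i _; exact: gg_cont.
Qed.

Lemma gg'_cont i : continuous (gg' i).
Proof.
move=> y; apply: cvgD; first exact: gg_cont.
case: (i == ord0); last exact: cvg_cst.
apply: (@continuous_max R T (fun=> 0) (fun y => eta - ss y)).
  exact: cvg_cst.
by apply: cvgB; [exact: cvg_cst | exact: ss_cont].
Qed.

Lemma nrm_cont : continuous nrm.
Proof.
move=> y; apply: (continuous_comp (f := fun y => \sum_i gg' i y ^+ 2) (g := Num.sqrt)); last first.
  exact: sqrt_continuous.
apply: continuous_big => //; first exact: add_continuous.
by move=> i _ z; apply: cvgM; exact: gg'_cont.
Qed.

Lemma vv_cont i : continuous (vv i).
Proof.
move=> y; apply: cvgM; first exact: gg'_cont.
apply: cvgV; first by rewrite gt_eqF ?nrm_gt0.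
exact: nrm_cont.
Qed.

Lemma ww_cont i : continuous (ww i).
Proof. by move=> y; apply: cvgD; [exact: cvg_cst | exact: vv_cont]. Qed.

Lemma HH_cont i j : continuous (fun y => HH y i j).
Proof.
have -> : (fun y => HH y i j) = (fun y => (i==j)%:R - ww i y * ww j y / (1 + vv ord0 y)).
  by apply: funext => y; rewrite mxE.
move=> y; apply: cvgB; first exact: cvg_cst.
apply: cvgM; first by apply: cvgM; exact: ww_cont.
apply: cvgV; first exact: t_neq0.
by apply: cvgD; [exact: cvg_cst | exact: vv_cont].
Qed.

Lemma vv_supp y : (exists i, dd i y < eta) -> forall i, vv i y != 0 -> dd i y < 2 * eta.
Proof.
move=> [i0 hi0] i hi.
have hs : eta <= ss y.
  rewrite /ss (bigD1 i0) //=.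
  have : 2 * eta - dd i0 y <= gg i0 y by rewrite /gg le_max lexx orbT.
  have : 0 <= \sum_(i < m.+1 | i != i0) gg i y by rewrite sumr_ge0 // => *; exact: gg_ge0.
  move=> h1 h2; lra.
have e0 : Num.max 0 (eta - ss y) = 0.
  by apply/max_idPl; lra.
move: hi; rewrite /vv /gg' e0 if_same addr0 /gg.
case: (leP (2 * eta - dd i y) 0) => h; last by move=> _; lra.
by rewrite mul0r eqxx.
Qed.

End Construction.

Lemma block_corner (C : pzRingType) p (M : 'M[C]_p.+1) (c : C) (i j : 'I_p.+1) :
  ((M : 'M[C]_(1 + p)) - block_mx c%:M 0 0 (drsubmx (M : 'M[C]_(1 + p)))) i j =
  if (i == ord0) || (j == ord0) then (M - c%:M) i j else 0.
Proof.
rewrite [LHS]mxE [X in _ + X]mxE.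
case: (split_ordP (i : 'I_(1 + p))) => i1 ->; case: (split_ordP (j : 'I_(1 + p))) => j1 ->;
  rewrite ?block_mxEul ?block_mxEur ?block_mxEdl ?block_mxEdr.
all: rewrite !mxE ?ord1 -!val_eqE /=.
all: by rewrite ?mulr0n ?subrr.
Qed.

Section CplxFacts.
Variable R : realType.
Local Notation C := (Cplx R).

Lemma rc_real (a : R) : Num.conj (a%:C : C) = a%:C.
Proof. by apply: conj_Creal; apply/complex_realP; exists a. Qed.

Lemma cmod_ge0 (z : C) : 0 <= cmod z.
Proof. by rewrite -(@ler0c R) cmodE. Qed.

Lemma cmodM (z w : C) : cmod (z * w) = cmod z * cmod w.
Proof. by apply: (@complexI R); rewrite rmorphM !cmodE normrM. Qed.

Lemma cmod0 : cmod (0 : C) = 0.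
Proof. by apply: (@complexI R); rewrite cmodE normr0. Qed.

Lemma cmod_real (a : R) : cmod (a%:C : C) = `|a|.
Proof. by apply: (@complexI R); rewrite cmodE normc_real. Qed.

Lemma cmod_sum n (F : 'I_n -> C) : cmod (\sum_i F i) <= \sum_i cmod (F i).
Proof.
have h : `|\sum_i F i| <= \sum_i `|F i| by exact: ler_norm_sum.
have h2 : \sum_i `|F i| = (\sum_i cmod (F i))%:C.
  by rewrite rmorph_sum; apply: eq_bigr => i _; rewrite -cmodE.
by rewrite h2 -cmodE lecR in h.
Qed.

Lemma cmod2 (z : C) : (cmod z ^+ 2)%:C = z * Num.conj z.
Proof. by rewrite rmorphXn /= cmodE normCK. Qed.

Lemma CS_real n (a b : 'I_n -> R) :
  (\sum_i a i * b i) ^+ 2 <= (\sum_i a i ^+ 2) * (\sum_i b i ^+ 2).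
Proof.
have E1 : (\sum_i a i ^+ 2) * (\sum_i b i ^+ 2) = \sum_i \sum_j (a i ^+ 2 * b j ^+ 2).
  by rewrite big_distrlr.
have E2 : (\sum_i a i ^+ 2) * (\sum_i b i ^+ 2) = \sum_i \sum_j (a j ^+ 2 * b i ^+ 2).
  rewrite mulrC big_distrlr /=; apply: eq_bigr => i _; apply: eq_bigr => j _.
  by rewrite mulrC.
have E3 : (\sum_i a i * b i) ^+ 2 = \sum_i \sum_j ((a i * b i) * (a j * b j)).
  by rewrite expr2 big_distrlr.
have H0 : 0 <= \sum_i \sum_j (a i * b j - a j * b i) ^+ 2.
  by apply: sumr_ge0 => i _; apply: sumr_ge0 => j _; exact: sqr_ge0.
have E4 : \sum_i \sum_j (a i * b j - a j * b i) ^+ 2 =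
   \sum_i \sum_j (a i ^+ 2 * b j ^+ 2) + \sum_i \sum_j (a j ^+ 2 * b i ^+ 2)
   - 2 * \sum_i \sum_j ((a i * b i) * (a j * b j)).
  rewrite mulr_sumr -!big_split -sumrN -big_split /=; apply: eq_bigr => i _.
  rewrite mulr_sumr -!big_split -sumrN -big_split /=; apply: eq_bigr => j _.
  ring.
rewrite -E1 -E2 -E3 in E4; lra.
Qed.

Lemma CS_cplx n (z u : 'I_n -> C) :
  cmod (\sum_i z i * u i) ^+ 2 <= (\sum_i cmod (z i) ^+ 2) * (\sum_i cmod (u i) ^+ 2).
Proof.
have hc := CS_real _ (fun i => cmod (z i)) (fun i => cmod (u i)); simpl in hc. apply: le_trans hc.
rewrite ler_sqr ?nnegrE ?cmod_ge0 //; last first.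
  by apply: sumr_ge0 => i _; rewrite mulr_ge0 ?cmod_ge0.
apply: (le_trans (cmod_sum _ _)).
by apply: ler_sum => i _; rewrite le_eqVlt; apply/orP; left; apply/eqP; apply: cmodM.
Qed.

Lemma orth_norm n (H : 'M[R]_n)
  (HH : forall l l', \sum_j H l j * H l' j = (l == l')%:R) (z : 'I_n -> C) :
  \sum_j cmod (\sum_l z l * (H l j)%:C) ^+ 2 = \sum_l cmod (z l) ^+ 2.
Proof.
apply: (@complexI R); rewrite !rmorph_sum /=.
under eq_bigr do rewrite cmod2 rmorph_sum /= mulr_suml.
under [RHS]eq_bigr do rewrite cmod2.
transitivity (\sum_j \sum_l \sum_l' (z l * Num.conj (z l') * (H l j * H l' j)%:C)).
  apply: eq_bigr => j _; apply: eq_bigr => l _; rewrite mulr_sumr.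
  apply: eq_bigr => l' _; rewrite rmorphM /= rc_real !rmorphM /=; ring.
rewrite exchange_big /=; apply: eq_bigr => l _.
rewrite exchange_big /=.
transitivity (\sum_l' (z l * Num.conj (z l') * (l == l')%:R)).
  apply: eq_bigr => l' _; rewrite -mulr_sumr -rmorph_sum /= HH.
  by rewrite (rmorph_nat (real_complex R)).
under eq_bigr do rewrite mulrC.
by rewrite sumr_delta.
Qed.

Lemma core_bound q (E N : 'M[C]_q.+1) (u : 'cV[C]_q.+1) rho2 :
 (forall i j, E i j = if (i == ord0) || (j == ord0) then N i j else 0) ->
 \sum_j cmod (N ord0 j) ^+ 2 <= rho2 -> \sum_i cmod (N i ord0) ^+ 2 <= rho2 ->
 \sum_j cmod (u j 0) ^+ 2 <= 1 ->
 \sum_i cmod ((E *m u) i 0) ^+ 2 <= 2 * rho2.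
Proof.
move=> hE h1 h2 hu.
have r0 : 0 <= rho2 by apply: le_trans h1; apply: sumr_ge0 => *; exact: sqr_ge0.
have hu0 : cmod (u ord0 0) ^+ 2 <= 1.
  apply: le_trans hu; rewrite (bigD1 ord0) //= lerDl; apply: sumr_ge0 => *; exact: sqr_ge0.
have e0 : (E *m u) ord0 0 = \sum_j N ord0 j * u j 0.
  by rewrite mxE; apply: eq_bigr => j _; rewrite hE eqxx.
have ei : forall i, i != ord0 -> (E *m u) i 0 = N i ord0 * u ord0 0.
  move=> i hi; rewrite mxE (bigD1 ord0) //= big1 ?addr0 => [|j hj].
    by rewrite hE eqxx orbT.
  by rewrite hE (negPf hi) (negPf hj) mul0r.
rewrite (bigD1 ord0) //= e0.
have t1 := CS_cplx _ (fun j => N ord0 j) (fun j => u j 0); simpl in t1.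
have su0 : 0 <= \sum_j cmod (u j 0) ^+ 2 by apply: sumr_ge0 => *; exact: sqr_ge0.
have sn0 : 0 <= \sum_j cmod (N ord0 j) ^+ 2 by apply: sumr_ge0 => *; exact: sqr_ge0.
have t1' : (\sum_j cmod (N ord0 j) ^+ 2) * (\sum_j cmod (u j 0) ^+ 2) <= rho2 * 1.
  by apply: ler_pM.
have t2 : \sum_(i | i != ord0) cmod ((E *m u) i 0) ^+ 2 <=
          \sum_(i | i != ord0) cmod (N i ord0) ^+ 2.
  apply: ler_sum => i hi; rewrite ei // cmodM exprMn.
  by apply: ler_piMr; [exact: sqr_ge0 | exact: hu0].
have t3 : \sum_(i | i != ord0) cmod (N i ord0) ^+ 2 <= \sum_i cmod (N i ord0) ^+ 2.
  by rewrite [X in _ <= X](bigD1 ord0) //= lerDr sqr_ge0.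
lra.
Qed.

Lemma opnorm_le q k (E : 'M[C]_q) B : 0 <= B ->
  (forall u : 'cV[C]_q, \sum_j cmod (u j 0) ^+ 2 <= 1 ->
      \sum_i cmod ((E *m u) i 0) ^+ 2 <= B ^+ 2) ->
  cmx_opnorm (block_mx E 0 0 0 : 'M[C]_(q + k)) <= B.
Proof.
move=> B0 hB; rewrite /cmx_opnorm; apply: ge_sup.
  exists (cvec_norm ((block_mx E 0 0 0 : 'M[C]_(q+k)) *m 0)); exists 0 => //=.
  rewrite /cvec_norm big1 ?sqrtr0 // => i _.
  by rewrite mxE cmod0 expr0n.
move=> _ [x hx <-].
rewrite -[x]vsubmxK mul_block_col !mul0mx !addr0.
rewrite /cvec_norm big_split_ord /=.
rewrite [X in _ + X]big1 ?addr0 => [|i _]; last by rewrite col_mxEd mxE cmod0 expr0n.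
under eq_bigr do rewrite col_mxEu.
rewrite -(ger0_norm B0) -sqrtr_sqr ler_sqrt ?sqr_ge0 //.
apply: hB.
move: hx; rewrite /cvec_norm /= big_split_ord /=.
set S1 := \sum_(i < q) _; set S2 := \sum_(i < k) _ => hx.
have S10 : 0 <= S1 by apply: sumr_ge0 => *; exact: sqr_ge0.
have S20 : 0 <= S2 by apply: sumr_ge0 => *; exact: sqr_ge0.
have hs := sqr_sqrtr (addr_ge0 S10 S20).
have hs0 := sqrtr_ge0 (S1 + S2).
have e : \sum_j cmod (usubmx x j 0) ^+ 2 = S1.
  by apply: eq_bigr => j _; rewrite mxE.
rewrite e; nra.
Qed.

End CplxFacts.

End LibSec.

Theorem theorem3p1 (R : realType) (X Y : metricType R)
  (cX : compact [set: X]) (cY : compact [set: Y])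
  (p k : nat) (lam : 'I_(p.+1 + k) -> Y -> X)
  (lam_cont : forall i, continuous (lam i))
  (x0 : X) (f : X -> Cplx R) (f_cont : continuous f)
  (eps : R) (eps_gt0 : 0 < eps) (eta : R) (eta_gt0 : 0 < eta)
  (f_eta : forall x y : X, mdist x y < 2 * eta -> cmod (f x - f y) < eps)
  (F : 'I_p.+1 -> set Y)
  (F_closed : forall i, closed (F i)) (F_nonempty : forall i, F i !=set0)
  (F_lam : forall (i : 'I_p.+1) (y : Y), F i y -> mdist (lam (lshift k i) y) x0 < eta) :
  exists (a : Y -> 'M[Cplx R]_p.+1) (b : Y -> 'M[Cplx R]_p),
    (forall i j, continuous (fun y => a y i j)) /\
    (forall i j, continuous (fun y => b y i j)) /\
    (forall y, unitary_cmx (block_mx (a y) 0 0 1%:M : 'M[Cplx R]_(p.+1 + k))) /\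
    (forall y, (exists i, F i y) ->
       cmx_opnorm ((block_mx (a y) 0 0 1%:M : 'M[Cplx R]_(p.+1 + k))
                 *m diag_starhom lam f y
                 *m ctrmx (block_mx (a y) 0 0 1%:M : 'M[Cplx R]_(p.+1 + k))
               - (block_mx (block_mx (f x0)%:M 0 0 (b y)) 0 0
                    (diag_mx (\row_j f (lam (rshift p.+1 j) y)))
                  : 'M[Cplx R]_(1 + p + k)))
       < 2 * eps).
Proof.
pose dd (i : 'I_p.+1) (y : Y) := mdist (lam (lshift k i) y) x0.
have dd_cont : forall i, continuous (dd i).
  by move=> i; apply: mdist_cont; exact: lam_cont.
pose H y := HH R Y p dd eta y.

pose a y : 'M[Cplx R]_p.+1 := map_mx (real_complex R) (H y).
pose d y : 'rV[Cplx R]_p.+1 := \row_i f (lam (lshift k i) y).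
pose ADA y : 'M[Cplx R]_p.+1 := a y *m diag_mx (d y) *m a y.
pose b y : 'M[Cplx R]_p := drsubmx (ADA y : 'M[Cplx R]_(1 + p)).
exists a, b.
have Hs : forall y, (H y)^T = H y.
  by move=> y; apply/matrixP => i j; rewrite mxE HH_sym.
have Wreal : forall y, (block_mx (a y) 0 0 1%:M : 'M[Cplx R]_(p.+1 + k)) =
     map_mx (real_complex R) (block_mx (H y) 0 0 1%:M).
  by move=> y; rewrite map_block_mx !map_mx0 map_mx1.
have Wsym : forall y, ctrmx (block_mx (a y) 0 0 1%:M : 'M[Cplx R]_(p.+1 + k)) =
     block_mx (a y) 0 0 1%:M.
  move=> y; rewrite Wreal.
  have Bs : (block_mx (H y) 0 0 1%:M : 'M[R]_(p.+1 + k))^T = block_mx (H y) 0 0 1%:M.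
    by rewrite tr_block_mx Hs !trmx0 tr_scalar_mx.
  apply/matrixP => i j.
  set B := block_mx (H y) 0 0 1%:M in Bs *.
  have hBij : B j i = B i j by move: (congr1 (fun M : 'M[R]_(p.+1 + k) => M i j) Bs); rewrite mxE.
  rewrite /ctrmx [LHS]mxE [in LHS]mxE [in LHS]mxE hBij [RHS]mxE; apply: rc_real.
have WW : forall y, (block_mx (a y) 0 0 1%:M : 'M[Cplx R]_(p.+1 + k)) *m
     block_mx (a y) 0 0 1%:M = 1%:M.
  move=> y; rewrite Wreal -map_mxM mulmx_block !mulmx0 !mul0mx !addr0 add0r mulmx1.
  by rewrite HH_orth // -scalar_mx_block map_mx1.
have a_cont : forall i j, continuous (fun y => a y i j).
  move=> i j.
  have -> : (fun y => a y i j) = (fun y => real_complex R (H y i j)).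
    by apply: funext => y; rewrite mxE.
  apply: rc_cont; exact: HH_cont.
split; first exact: a_cont.
split.
  have bE : forall y i j, b y i j =
      \sum_l (a y (rshift 1 i) l * f (lam (lshift k l) y)) * a y l (rshift 1 j).
    move=> y i j; rewrite /b; transitivity ((ADA y : 'M[Cplx R]_p.+1) (rshift 1 i) (rshift 1 j)); first by rewrite !mxE. rewrite /ADA mul_mx_diag mxE; by apply: eq_bigr => l _; rewrite !mxE.
  move=> i j.
  have -> : (fun y => b y i j) = (fun y => \sum_l (a y (rshift 1 i) l * f (lam (lshift k l) y)) * a y l (rshift 1 j)).
    by apply: funext => y; rewrite bE.
  apply: continuous_big => //; first exact: add_continuous.
  move=> l _ y; apply: cvgM; last exact: a_cont.
  apply: cvgM; first exact: a_cont.
  apply: (continuous_comp (f := lam (lshift k l)) (g := f)); [exact: lam_cont | exact: f_cont].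
split.
  by move=> y; rewrite /unitary_cmx Wsym WW.
move=> y [i0 hF].
have hsupp : exists i, dd i y < eta by exists i0; exact: F_lam.
have Dsplit : diag_starhom lam f y = block_mx (diag_mx (d y)) 0 0
      (diag_mx (\row_j f (lam (rshift p.+1 j) y))).
  rewrite /diag_starhom -diag_mx_row; congr diag_mx.
  by apply/matrixP => i j; case: (split_ordP j) => l ->; rewrite ?row_mxEl ?row_mxEr !mxE.
rewrite Wsym Dsplit !mulmx_block !mulmx0 !mul0mx !addr0 !add0r !mul1mx !mulmx1.
rewrite opp_block_mx add_block_mx !oppr0 !addr0 mul0mx subrr.
pose c := f x0.
pose e (l : 'I_p.+1) := f (lam (lshift k l) y) - c.
pose v l := vv R Y p dd eta l y.
pose rho2 := \sum_l v l ^+ 2 * cmod (e l) ^+ 2.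
pose N : 'M[Cplx R]_p.+1 := a y *m diag_mx (d y) *m a y - c%:M.
have aE : forall i j, a y i j = real_complex R (H y i j) by move=> i j; rewrite mxE.
have asym : forall i j, a y i j = a y j i by move=> i j; rewrite !aE HH_sym.
have aa : a y *m a y = 1%:M by rewrite /a -map_mxM HH_orth // map_mx1.
have Horth : forall l l', \sum_j H y l j * H y l' j = (l == l')%:R.
  move=> l l'; have := HH_orth R Y p dd eta eta_gt0 y.
  move/matrixP/(_ l l'); rewrite !mxE => <-.
  by apply: eq_bigr => j _; rewrite (HH_sym _ _ _ _ _ y l' j).
have NE : forall i j, N i j = \sum_l (a y i l * e l) * a y l j.
  move=> i j.
  have -> : N = a y *m diag_mx (\row_l e l) *m a y.
    have -> : diag_mx (\row_l e l) = diag_mx (d y) - c%:M.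
      by apply/matrixP => i' j'; rewrite !mxE mulrnBl.
    by rewrite mulmxBr mulmxBl mul_mx_scalar -scalemxAl aa scalemx1.
  by rewrite mul_mx_diag mxE; apply: eq_bigr => l _; rewrite !mxE.
have Nsym : forall i j, N i j = N j i.
  move=> i j; rewrite !NE; apply: eq_bigr => l _.
  rewrite (asym i l) (asym l j); ring.
have rowN : \sum_j cmod (N ord0 j) ^+ 2 = rho2.
  transitivity (\sum_j cmod (\sum_l (a y ord0 l * e l) * real_complex R (H y l j)) ^+ 2).
    apply: eq_bigr => j _; rewrite NE; congr (cmod _ ^+ 2).
    by apply: eq_bigr => l _; rewrite (aE l j).
  rewrite (orth_norm _ _ _ Horth (fun l => a y ord0 l * e l)).
  apply: eq_bigr => l _; rewrite cmodM exprMn (aE ord0 l) HH_sym HH_col0 //.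
  by rewrite cmod_real normrN ger0_norm ?vv_ge0.
have colN : \sum_i cmod (N i ord0) ^+ 2 = rho2.
  by rewrite -rowN; apply: eq_bigr => i _; rewrite Nsym.
have hv1 : \sum_l v l ^+ 2 = 1 by exact: sum_vv2.
have [l0 hl0] : exists l, v l != 0.
  case: (boolP [exists l, v l != 0]) => [/existsP [l0 hl0] | /existsPn hn].
    by exists l0.
  move: hv1; rewrite big1 => [/eqP|l _]; first by rewrite eq_sym oner_eq0.
  by move: (hn l); rewrite negbK => /eqP ->; rewrite expr0n.
have hc : forall l, v l != 0 -> cmod (e l) < eps.
  move=> l hl; apply: f_eta.
  exact: (vv_supp _ _ _ _ _ _ hsupp l hl).
have rho_lt : rho2 < eps ^+ 2.
  have e1 : \sum_l v l ^+ 2 = \sum_(l | v l != 0) v l ^+ 2.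
    rewrite (bigID (fun l => v l != 0)) /= [X in _ + X]big1 ?addr0 // => l /negPn/eqP ->.
    by rewrite expr0n.
  have e2 : rho2 = \sum_(l | v l != 0) v l ^+ 2 * cmod (e l) ^+ 2.
    rewrite /rho2 (bigID (fun l => v l != 0)) /= [X in _ + X]big1 ?addr0 // => l /negPn/eqP ->.
    by rewrite expr0n mul0r.
  have e3 : eps ^+ 2 = \sum_(l | v l != 0) v l ^+ 2 * eps ^+ 2.
    by rewrite -mulr_suml -e1 hv1 mul1r.
  rewrite e2 e3; apply: ltr_sum.
    by apply/hasP; exists l0 => //; rewrite mem_index_enum.
  move=> l hl; rewrite ltr_pM2l ?exprn_gt0 //; last first.
    by rewrite lt_def hl vv_ge0.
  have := hc l hl; have := cmod_ge0 _ (e l) => h1 h2; nra.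
have r0 : 0 <= rho2 by rewrite -rowN; apply: sumr_ge0 => *; exact: sqr_ge0.
have B0 : 0 <= Num.sqrt (2 * rho2) := sqrtr_ge0 _.
apply: (le_lt_trans (opnorm_le _ _ k _ _ B0 _)).
  move=> u hu; rewrite sqr_sqrtr ?mulr_ge0 //.
  apply: (core_bound _ _ _ N) => //; last by rewrite colN.
    by move=> i j; exact: block_corner.
  by rewrite rowN.
have e0 : 0 <= 2 * eps by lra.
rewrite -(ger0_norm e0) -sqrtr_sqr ltr_sqrt ?exprn_gt0 //; last by lra.
nra.
Qed.
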